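(* The number of distinct central characters $\phi_{1,s}:Z(H_1)\to\mathbb C$ ($s\in T$) which admit one-dimensional representations (i.e. such that $H_{1,s}$ has a one-dimensional representation) equals the cardinality of the center of $G$.
   Context: Let $R$ be an irreducible root system of rank $n$ with positive roots $R^+$, Weyl group $W_0$, weight lattice $X$; $W=W_0\ltimes X$ is the extended affine Weyl group with length function $l$ (for $w\in W_0,x\in X$: $l(wx)=\sum_{\alpha\in R^+,w(\alpha)\in R^-}|\langle x,\alpha^\vee\rangle+1|+\sum_{\alpha\in R^+,w(\alpha)\in R^+}|\langle x,\alpha^\vee\rangle|$), $S$ the set of length-one elements of $W_0\ltimes\mathbb ZR$. $H_q$ ($q\in\mathbb C^*$) is the $\mathbb C$-algebra with basis $T_w$ ($w\in W$), relations $(T_r-q)(T_r+1)=0$ ($r\in S$), $T_wT_u=T_{wu}$ if $l(wu)=l(w)+l(u)$; $H_1=\mathbb C[W]$. Let $X^+=\{x\in X: l(wx)=l(w)+l(x)\ \forall w\in W_0\}$. Fix a square root $q^{1/2}$. For $x\in X$ write $x=yz^{-1}$ with $y,z\in X^+$ and set $\theta_x=q^{(l(z)-l(y))/2}T_yT_z^{-1}$ (independent of the choice). For $x\in X^+$ let $S_x=\sum_{y\in W_0\cdot x}\theta_y$; these span the center $Z(H_q)$. Let $G$ be a simply connected simple complex algebraic group with root system $R$, maximal torus $T$, so $X=\mathrm{Hom}(T,\mathbb C^* )$ and $W_0=N_G(T)/T$. For $s\in T$, $\phi_{q,s}:Z(H_q)\to\mathbb C$ is the restriction of the algebra map $\theta_x\mapsto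 x(s)$ on the span of the $\theta_x$; $I_{q,s}$ is the two-sided ideal generated by $S_x-\phi_{q,s}(S_x)$, $x\in X^+$, and $H_{q,s}=H_q/I_{q,s}$. *)

(* Defs.v *)
From HB Require Import structures.
From mathcomp Require Import all_boot all_order all_algebra.
From Stdlib Require Import ClassicalEpsilon.
Set Implicit Arguments. Unset Strict Implicit. Unset Printing Implicit Defensive.
Import Order.TTheory GRing.Theory Num.Theory.
Local Open Scope ring_scope.

(* Root datum of a simply connected simple group, encoded by its       *)
(* Cartan matrix A, with convention  A i j = < alpha_i^vee , alpha_j >. *)
(* The weight lattice X is Z^n (column vectors) in the basis of the    *)
(* fundamental weights omega_i; simple coroots are the dual basis, so  *)
(* < x , alpha_i^vee > = x_i.  Simple root alpha_j has coordinates     *)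
(* (A i j)_i.                                                          *)

(* A is the Cartan matrix of an irreducible (reduced) root system:     *)
(* generalized Cartan matrix, indecomposable, symmetrizable with a     *)
(* positive definite symmetrization (finite type).                     *)
Definition cartan_irreducible (n : nat) (A : 'M[int]_n) : Prop :=
  [/\ (forall i, A i i = 2),
      (forall i j, i != j -> A i j <= 0),
      (forall i j, A i j = 0 <-> A j i = 0),
      (forall P : {set 'I_n},
          (forall i j, i \in P -> j \notin P -> A i j = 0) ->
          P = set0 \/ P = setT) &
      exists d : 'I_n -> rat,
        [/\ (forall i, 0 < d i),
            (forall i j, d i * (A i j)%:~R = d j * (A j i)%:~R) &
            (forall v : 'I_n -> rat, (exists i, v i != 0) ->
               0 < \sum_i \sum_j v i * d i * (A i j)%:~R * v j)]].

Definition alpha (n : nat) (A : 'M[int]_n) (j : 'I_n) : 'cV[int]_n :=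
  \col_i A i j.

Definition sref (n : nat) (A : 'M[int]_n) (i : 'I_n) : 'M[int]_n :=
  1%:M - alpha A i *m (delta_mx (ord0 : 'I_1) i).

(* the finite Weyl group W_0, as the group of matrices generated by the
   simple reflections (acting on X by left multiplication) *)
Inductive W0 (n : nat) (A : 'M[int]_n) : 'M[int]_n -> Prop :=
  | W0_one : W0 A 1%:M
  | W0_gen i w : W0 A w -> W0 A (sref A i *m w).

Definition is_root (n : nat) (A : 'M[int]_n) (a : 'cV[int]_n) : Prop :=
  exists w j, W0 A w /\ a = w *m alpha A j.

Definition in_orbit (n : nat) (A : 'M[int]_n) (x y : 'cV[int]_n) : Prop :=
  exists w, W0 A w /\ y = w *m x.

Definition dominant (n : nat) (x : 'cV[int]_n) : bool :=
  [forall i, 0 <= x i ord0].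

(* sum of f over the (finite) orbit W_0 . x  (0 if the orbit were infinite) *)
Definition orbit_sum (n : nat) (A : 'M[int]_n) (R : nmodType)
    (x : 'cV[int]_n) (f : 'cV[int]_n -> R) : R :=
  match excluded_middle_informative
          (exists l : seq 'cV[int]_n,
              uniq l /\ forall y, y \in l <-> in_orbit A x y) with
  | left H => \sum_(y <- proj1_sig (constructive_indefinite_description _ H)) f y
  | right _ => 0
  end.

(* the torus T = Hom(X, F^x) = (F^x)^n, and the character x(s) *)
Definition torus (n : nat) (F : fieldType) (s : 'rV[F]_n) : Prop :=
  forall i, s ord0 i != 0.

Definition ev (n : nat) (F : fieldType) (x : 'cV[int]_n) (s : 'rV[F]_n) : F :=
  \prod_i (s ord0 i) ^ (x i ord0).

(* central character phi_{1,s} : Z(H_1) -> F, recorded by its values on the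
   spanning family S_x (x in X^+):  phi_{1,s}(S_x) = sum_{y in W_0 x} y(s). *)
Definition cchar (n : nat) (A : 'M[int]_n) (F : fieldType) (s : 'rV[F]_n)
    : 'cV[int]_n -> F :=
  fun x => if dominant x then orbit_sum A x (fun y => ev y s) else 0.

(* H_{1,s} = C[W] / I_{1,s} has a one-dimensional representation:
   a unital algebra map rho : H_1 = C[W] -> F killing the generators
   S_x - phi_{1,s}(S_x) of I_{1,s}.  Elements of W = W_0 |x X are pairs
   (x, w) standing for t_x w (x in X, w in W_0), with product
   (t_x w)(t_x' w') = t_(x + w x') (w w');  chi x w = rho(T_{t_x w}).
   At q = 1, theta_y = T_{t_y}, so rho(S_x) = sum_{y in W_0 x} chi y 1. *)
Definition admits_1dim (n : nat) (A : 'M[int]_n) (F : fieldType)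
    (s : 'rV[F]_n) : Prop :=
  exists chi : 'cV[int]_n -> 'M[int]_n -> F,
    [/\ chi 0 1%:M = 1,
        (forall x w x' w', W0 A w -> W0 A w' ->
            chi (x + w *m x') (w *m w') = chi x w * chi x' w') &
        (forall x, dominant x ->
            orbit_sum A x (fun y => chi y 1%:M) = orbit_sum A x (fun y => ev y s))].

(* the centre of G, as the subgroup of T:  Z(G) = { s in T | alpha(s) = 1
   for all roots alpha } *)
Definition center_G (n : nat) (A : 'M[int]_n) (F : fieldType) (s : 'rV[F]_n)
    : Prop :=
  torus s /\ forall a, is_root A a -> ev a s = 1.

Definition card_is (T : Type) (P : T -> Prop) (k : nat) : Prop :=
  exists f : 'I_k -> T, injective f /\ forall t, P t <-> exists i, f i = t.

(* Main.v *)
Require Import Defs.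
From HB Require Import structures.
From mathcomp Require Import all_boot all_order all_algebra.
From mathcomp Require Import ring lra zify.
From Stdlib Require Import ClassicalEpsilon FunctionalExtensionality.
Set Implicit Arguments. Unset Strict Implicit. Unset Printing Implicit Defensive.
Import Order.TTheory GRing.Theory Num.Theory.
Local Open Scope ring_scope.
Definition decb (P : Prop) : bool := if excluded_middle_informative P then true else false.
Lemma decbP P : reflect P (decb P).
Proof. rewrite /decb; case: excluded_middle_informative => h; by constructor. Qed.
Lemma fin_list (T : eqType) (P : T -> Prop) (L : seq T) :
  (forall t, P t -> t \in L) -> exists l : seq T, uniq l /\ forall t, t \in l <-> P t.
Proof.
move=> HL; exists (undup (filter (fun t => decb (P t)) L)); split.
  exact: undup_uniq.
move=> t; rewrite mem_undup mem_filter; split.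
- by case/andP=> /decbP.
- move=> Pt; rewrite (HL _ Pt) andbT; exact/decbP.
Qed.
Lemma card_list (T : eqType) (P : T -> Prop) (l : seq T) :
  uniq l -> (forall t, t \in l <-> P t) -> card_is P (size l).
Proof.
move=> ul Hl; exists (fun i => tnth (in_tuple l) i); split.
- move=> i j. have [x0 _] : exists x0 : T, true by exists (tnth (in_tuple l) i).
  rewrite !(tnth_nth x0) /= => /eqP.
  by rewrite nth_uniq // => /eqP /val_inj.
- move=> t; split.
  + by move/Hl/(tnthP (in_tuple l)) => [i ->]; exists i.
  + by move=> [i <-]; apply/Hl; exact: mem_tnth.
Qed.
Definition ee (n : nat) (i : 'I_n) : 'cV[int]_n := delta_mx i ord0.
Lemma sref_mul n (A : 'M[int]_n) i (x : 'cV_n) : sref A i *m x = x - x i ord0 *: alpha A i.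
Proof.
rewrite /sref mulmxBl mul1mx -mulmxA -rowE.
have -> : row i x = (x i ord0)%:M.
  by apply/matrixP => a b; rewrite !mxE !ord1 eqxx mulr1n.
by rewrite mul_mx_scalar.
Qed.

Lemma sref_sq n (A : 'M[int]_n) i : A i i = 2 -> sref A i *m sref A i = 1%:M.
Proof.
move=> Hii; rewrite {2}/sref mulmxBr mulmx1 mulmxA sref_mul {2}/alpha mxE Hii.
have -> : alpha A i - 2 *: alpha A i = - alpha A i.
  by apply/matrixP => a b; rewrite !mxE; ring.
by rewrite mulNmx opprK /sref subrK.
Qed.


Definition ishom n (F : fieldType) (t : 'cV[int]_n -> F) :=
  t 0 = 1 /\ forall x y, t (x + y) = t x * t y.

Lemma hom_N n (F : fieldType) (t : 'cV[int]_n -> F) x : ishom t -> t (- x) = (t x)^-1.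
Proof.
move=> [t0 tD].
have h : t (- x) * t x = 1 by rewrite -tD addNr.
have nz : t x != 0 by apply/eqP => e; move: h; rewrite e mulr0 => /eqP; rewrite eq_sym oner_eq0.
by rewrite -[LHS]mulr1 -(divff nz) mulrA h mul1r.
Qed.

Lemma hom_neq0 n (F : fieldType) (t : 'cV[int]_n -> F) x : ishom t -> t x != 0.
Proof.
move=> [t0 tD].
have h : t (- x) * t x = 1 by rewrite -tD addNr.
by apply/eqP => e; move: h; rewrite e mulr0 => /eqP; rewrite eq_sym oner_eq0.
Qed.

Lemma hom_scale n (F : fieldType) (t : 'cV[int]_n -> F) x (m : int) :
  ishom t -> t (m *: x) = t x ^ m.
Proof.
move=> ht; have [t0 tD] := ht.
have hp : forall k : nat, t (k%:Z *: x) = t x ^ k%:Z.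
  elim=> [|k IH]; first by rewrite scale0r t0 expr0z.
  by rewrite intS scalerDl scale1r tD IH -exprSz intS.
case: m => k; first exact: hp.
by rewrite NegzE scaleNr hom_N // hp invr_expz.
Qed.

Lemma hom_sum n (F : fieldType) (t : 'cV[int]_n -> F) (I : Type) (r : seq I) (P : pred I) f :
  ishom t -> t (\sum_(i <- r | P i) f i) = \prod_(i <- r | P i) t (f i).
Proof. by move=> [t0 tD]; apply: (big_morph t tD t0). Qed.

Lemma col_decomp n (x : 'cV[int]_n) : x = \sum_i x i ord0 *: ee i.
Proof.
apply/matrixP => a b; rewrite ord1 summxE (bigD1 a) //= !mxE eqxx mulr1 big1 ?addr0 //.
by move=> j /negbTE; rewrite !mxE eq_sym => ->; rewrite mulr0.
Qed.

Lemma hom_ev n (F : fieldType) (t : 'cV[int]_n -> F) x :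
  ishom t -> t x = \prod_i t (ee i) ^ (x i ord0).
Proof.
move=> ht; rewrite {1}(col_decomp x) hom_sum //.
by apply: eq_bigr => i _; rewrite hom_scale.
Qed.

Lemma ev_hom n (F : fieldType) (s : 'rV[F]_n) : torus s -> ishom (fun x => ev x s).
Proof.
move=> hs; split.
  by rewrite /ev big1 // => i _; rewrite mxE expr0z.
move=> x y; rewrite /ev -big_split /=; apply: eq_bigr => i _.
by rewrite mxE expfzDr.
Qed.

Lemma ev_ee n (F : fieldType) (s : 'rV[F]_n) i : ev (ee i) s = s ord0 i.
Proof.
rewrite /ev (bigD1 i) //= !mxE eqxx /= expr1z big1 ?mulr1 //.
by move=> j /negbTE; rewrite !mxE => ->; rewrite expr0z.
Qed.

Definition sinv n (A : 'M[int]_n) (F : fieldType) (t : 'cV[int]_n -> F) :=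
  forall i x, t (sref A i *m x) = t x.

Lemma W0_inv n (A : 'M[int]_n) (F : fieldType) (t : 'cV[int]_n -> F) w :
  sinv A t -> W0 A w -> forall x, t (w *m x) = t x.
Proof.
move=> hs; elim=> [|i w' _ IH] x; first by rewrite mul1mx.
by rewrite -mulmxA hs IH.
Qed.

Lemma hom_sinv n (A : 'M[int]_n) (F : fieldType) (t : 'cV[int]_n -> F) :
  ishom t -> (forall i, t (alpha A i) = 1) -> sinv A t.
Proof.
move=> ht ha i x; have [t0 tD] := ht.
by rewrite sref_mul -scaleNr tD hom_scale // ha exp1rz mulr1.
Qed.


Lemma center_iff n (A : 'M[int]_n) (F : fieldType) (s : 'rV[F]_n) :
  center_G A s <-> torus s /\ forall j, ev (alpha A j) s = 1.
Proof.
split.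
  move=> [hs hr]; split => // j; apply: hr; exists 1%:M, j; split; first exact: W0_one.
  by rewrite mul1mx.
move=> [hs ha]; split => // a [w [j [hw ->]]].
have := W0_inv (hom_sinv (ev_hom hs) ha) hw (alpha A j) => /= ->; exact: ha.
Qed.

Lemma orbit_sum_eq n (A : 'M[int]_n) (R : nmodType) x (f g : 'cV[int]_n -> R) :
  (forall y, f y = g y) -> orbit_sum A x f = orbit_sum A x g.
Proof. by move=> h; rewrite (functional_extensionality f g h). Qed.

Lemma admits_center n (A : 'M[int]_n) (F : fieldType) (s : 'rV[F]_n) :
  (forall i, A i i = 2) -> admits_1dim A s ->
  exists s', center_G A s' /\ cchar A s = cchar A s'.
Proof.
move=> Hii [chi [c1 cM cO]].
pose t := fun y => chi y 1%:M.
have ht : ishom t.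
  split => // x y; rewrite /t -(cM _ _ _ _ (W0_one A) (W0_one A)).
  by rewrite !mul1mx.
have Ws i : W0 A (sref A i) by have := W0_gen i (W0_one A); rewrite mulmx1.
have cs i : chi 0 (sref A i) != 0.
  have := cM 0 (sref A i) 0 (sref A i) (Ws i) (Ws i).
  rewrite mulmx0 addr0 sref_sq // c1 => h.
  by apply/eqP => e; move: h; rewrite e mulr0 => /eqP; rewrite oner_eq0.
have hsinv : sinv A t.
  move=> i x.
  have e1 := cM (sref A i *m x) 1%:M 0 (sref A i) (W0_one A) (Ws i).
  have e2 := cM 0 (sref A i) x 1%:M (Ws i) (W0_one A).
  rewrite mulmx0 addr0 mul1mx in e1; rewrite add0r mulmx1 in e2.
  apply: (mulIf (cs i)); by rewrite /t -e1 e2 mulrC.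
pose s' := \row_i t (ee i).
have tev : forall y, t y = ev y s'.
  by move=> y; rewrite (hom_ev y ht) /ev; apply: eq_bigr => i _; rewrite mxE.
exists s'; split.
  apply/center_iff; split.
    by move=> i; rewrite mxE; exact: hom_neq0.
  move=> j; rewrite -tev.
  have := hsinv j (ee j); rewrite sref_mul !mxE eqxx /= scale1r.
  have [t0 tD] := ht.
  rewrite tD hom_N // => h.
  have := mulfI (hom_neq0 (ee j) ht) (etrans h (esym (mulr1 _))).
  by move/eqP; rewrite invr_eq1 => /eqP.
apply: functional_extensionality => x; rewrite /cchar.
case hd: (dominant x) => //.
rewrite -cO //; apply: orbit_sum_eq => y; exact: tev.
Qed.

Lemma center_admits n (A : 'M[int]_n) (F : fieldType) (s : 'rV[F]_n) :
  center_G A s -> torus s /\ admits_1dim A s.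
Proof.
move/center_iff=> [hs ha]; split => //.
exists (fun x w => ev x s); split => //.
- by have [] := ev_hom hs.
- move=> x w x' w' hw _; have [_ tD] := ev_hom hs.
  by rewrite tD (W0_inv (hom_sinv (ev_hom hs) ha) hw).
Qed.

Lemma ev_A n (A : 'M[int]_n) (F : fieldType) (s : 'rV[F]_n) v :
  center_G A s -> ev (A *m v) s = 1.
Proof.
move/center_iff=> [hs ha].
have -> : A *m v = \sum_j v j ord0 *: alpha A j.
  apply/matrixP => a b; rewrite ord1 !mxE summxE; apply: eq_bigr => j _.
  by rewrite !mxE mulrC.
rewrite (hom_sum _ _ _ (ev_hom hs)) big1 // => j _.
by rewrite (hom_scale _ _ (ev_hom hs)) ha exp1rz.
Qed.

Lemma center_fin n (A : 'M[int]_n) (F : closedFieldType) :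
  \det A != 0 -> exists L : seq 'rV[F]_n, forall s, center_G A s -> s \in L.
Proof.
move=> hd.
set m := `|\det A|%N.
have m0 : (0 < m)%N by rewrite absz_gt0.
pose p : {poly F} := 'X^m - 1%:P.
have [rs Hrs] := closed_field_poly_normal p.
have lc : lead_coef p != 0.
  by rewrite (eqP (monicXnsubC 1 m0)) oner_eq0.
have inrs : forall z : F, z ^+ m = 1 -> z \in rs.
  move=> z hz; have : root p z.
    by rewrite /root /p !hornerE hz subrr.
  by rewrite Hrs rootZ // root_prod_XsubC.
exists (map (fun f : {ffun 'I_n -> 'I_(size rs)} => \row_i nth 0 rs (f i))
            (enum {ffun 'I_n -> 'I_(size rs)})).
move=> s hc.
have hs : forall i, s ord0 i \in rs.
  move=> i; apply: inrs.
  have e : ev (A *m (\adj A *m ee i)) s = 1 by exact: ev_A.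
  have [hs _] := hc.
  rewrite mulmxA mul_mx_adj mul_scalar_mx (hom_scale _ _ (ev_hom hs)) ev_ee in e.
  rewrite /m; move: e; case: (\det A) => k /=.
    by rewrite -exprnP.
  by rewrite NegzE -invr_expz -exprnP => /eqP; rewrite invr_eq1 => /eqP.
have idx : forall i, (index (s ord0 i) rs < size rs)%N by move=> i; rewrite index_mem.
apply/mapP; exists [ffun i => Ordinal (idx i)]; first by rewrite mem_enum.
by apply/rowP => i; rewrite !mxE ffunE /= nth_index.
Qed.


Definition Gf n (A : 'M[int]_n) (d : 'I_n -> rat) (u v : 'I_n -> rat) : rat :=
  \sum_i \sum_j u i * d i * (A i j)%:~R * v j.

Lemma Gsym n (A : 'M[int]_n) d u v :
  (forall i j, d i * (A i j)%:~R = d j * (A j i)%:~R) -> Gf A d u v = Gf A d v u.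
Proof.
move=> ds; rewrite /Gf exchange_big; apply: eq_bigr => a _; apply: eq_bigr => b _.
transitivity (u b * (d b * (A b a)%:~R) * v a); first by rewrite !mulrA.
rewrite ds; ring.
Qed.

Lemma Gexp n (A : 'M[int]_n) d u v w r :
  (forall i j, d i * (A i j)%:~R = d j * (A j i)%:~R) ->
  (forall k, w k = u k - r * v k) ->
  Gf A d w w = Gf A d u u - 2 * r * Gf A d u v + r ^+ 2 * Gf A d v v.
Proof.
move=> ds Hw.
have e := Gsym u v ds.
have -> : Gf A d w w = Gf A d u u + (-r) * Gf A d u v + (-r) * Gf A d v u + r ^+ 2 * Gf A d v v.
  rewrite /Gf !mulr_sumr -!big_split /=; apply: eq_bigr => i _.
  rewrite !mulr_sumr -!big_split /=; apply: eq_bigr => j _.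
  rewrite !Hw; ring.
rewrite -e; ring.
Qed.

Lemma Gpos n (A : 'M[int]_n) d v :
  (forall v, (exists i, v i != 0) -> 0 < Gf A d v v) -> 0 <= Gf A d v v.
Proof.
move=> pd; case: (decbP (exists i, v i != 0)) => h; first exact/ltW/pd.
have h0 : forall i, v i = 0.
  by move=> i; apply/eqP; apply/negPn/negP => hi; apply: h; exists i.
by rewrite /Gf big1 // => i _; rewrite big1 // => j _; rewrite h0 !mul0r.
Qed.

Lemma GCS n (A : 'M[int]_n) d u v :
  (forall i j, d i * (A i j)%:~R = d j * (A j i)%:~R) ->
  (forall v, (exists i, v i != 0) -> 0 < Gf A d v v) ->
  Gf A d u v ^+ 2 <= Gf A d u u * Gf A d v v.
Proof.
move=> ds pd.
have key : forall r, 0 <= Gf A d u u - 2 * r * Gf A d u v + r ^+ 2 * Gf A d v v.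
  move=> r; rewrite -(@Gexp _ _ _ u v (fun k => u k - r * v k)) //; exact: Gpos.
move: key (Gpos v pd).
set a := Gf A d u u; set b := Gf A d u v; set c := Gf A d v v => key.
rewrite le_eqVlt => /orP [/eqP c0|cpos].
  rewrite -c0 mulr0; case: (eqVneq b 0) => [->|bn0]; first by rewrite expr0n.
  have := key ((a + 1) / (2 * b)); rewrite -c0 mulr0 addr0.
  have -> : a - 2 * ((a + 1) / (2 * b)) * b = -1 by field; rewrite ?pnatr_eq0 ?bn0 //; split. 
  by rewrite oppr_ge0 ler10.
have := key (b / c).
have cn0 : c != 0 by rewrite gt_eqF.
have -> : a - 2 * (b / c) * b + (b / c) ^+ 2 * c = (a * c - b ^+ 2) / c by field.
move=> h; have := mulr_ge0 h (ltW cpos); rewrite divfK // subr_ge0 mulrC //.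
Qed.

Lemma det_nz n (A : 'M[int]_n) d :
  (forall v, (exists i, v i != 0) -> 0 < Gf A d v v) -> \det A != 0.
Proof.
move=> pd; apply/negP => /eqP hd.
have : \det (map_mx (intr : int -> rat) A)^T == 0.
  by rewrite det_tr det_map_mx hd rmorph0.
case/det0P => v vn0 hv.
pose w i := v ord0 i.
have hs : forall i, \sum_j (A i j)%:~R * w j = 0.
  move=> i; have := congr1 (fun M : 'M[rat]_(1,n) => M ord0 i) hv; rewrite !mxE => e; apply: etrans _ e.
  by apply: eq_bigr => j _; rewrite !mxE mulrC.
have : 0 < Gf A d w w.
  apply: pd; case: (decbP (exists i, w i != 0)) => // h; exfalso.
  move/eqP: vn0; apply; apply/rowP => i; rewrite mxE.
  by apply/eqP; apply/negPn/negP => hi; apply: h; exists i.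
rewrite /Gf big1 ?ltxx // => i _.
transitivity (w i * d i * \sum_j (A i j)%:~R * w j).
  by rewrite mulr_sumr; apply: eq_bigr => j _; ring.
by rewrite hs mulr0.
Qed.

Definition vq n (y : 'cV[int]_n) : 'I_n -> rat := fun k => (y k ord0)%:~R.

Lemma Gf_r n (A : 'M[int]_n) d u (w : 'cV[int]_n) :
  Gf A d u (vq w) = \sum_i u i * d i * ((A *m w) i ord0)%:~R.
Proof.
apply: eq_bigr => i _; rewrite mxE rmorph_sum mulr_sumr; apply: eq_bigr => j _.
rewrite rmorphM /vq /=; ring.
Qed.


Lemma mul_ee n (A : 'M[int]_n) i : A *m ee i = alpha A i.
Proof.
apply/matrixP => a b; rewrite ord1 !mxE (bigD1 i) //= !mxE eqxx mulr1 big1 ?addr0 //.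
by move=> j /negbTE hj; rewrite !mxE hj mulr0.
Qed.

Lemma adj_alpha n (A : 'M[int]_n) i : \adj A *m alpha A i = \det A *: ee i.
Proof.
by rewrite -mul_ee mulmxA mul_adj_mx mul_scalar_mx.
Qed.

Lemma A_adj_ee n (A : 'M[int]_n) k : A *m (\adj A *m ee k) = \det A *: ee k.
Proof. by rewrite mulmxA mul_mx_adj mul_scalar_mx. Qed.

Lemma Gf_ee n (A : 'M[int]_n) d i (w : 'cV[int]_n) :
  Gf A d (vq (ee i)) (vq w) = d i * ((A *m w) i ord0)%:~R.
Proof.
rewrite Gf_r (bigD1 i) //= big1 ?addr0.
  by rewrite /vq !mxE eqxx /= mul1r.
by move=> k /negbTE hk; rewrite /vq !mxE hk /= !mul0r.
Qed.

Lemma Gf_adj n (A : 'M[int]_n) d u k :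
  Gf A d u (vq (\adj A *m ee k)) = u k * d k * (\det A)%:~R.
Proof.
rewrite Gf_r A_adj_ee (bigD1 k) //= big1 ?addr0.
  by rewrite !mxE eqxx /= mulr1.
by move=> j /negbTE hj; rewrite !mxE hj /= mulr0 mulr0.
Qed.

Definition qf n (A : 'M[int]_n) d (y : 'cV[int]_n) :=
  Gf A d (vq (\adj A *m y)) (vq (\adj A *m y)).

Lemma qf_sref n (A : 'M[int]_n) d :
  (forall i, A i i = 2) ->
  (forall i j, d i * (A i j)%:~R = d j * (A j i)%:~R) ->
  sinv A (qf A d).
Proof.
move=> Hii ds i y; rewrite /qf.
set c := \adj A *m y.
have ec : \adj A *m (sref A i *m y) = c - (\det A * y i ord0) *: ee i.
  by rewrite sref_mul mulmxBr -scalemxAr adj_alpha scalerA mulrC.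
set r : rat := (\det A * y i ord0)%:~R.
have hw : forall k, vq (\adj A *m (sref A i *m y)) k = vq c k - r * vq (ee i) k.
  by move=> k; rewrite ec /vq /r !mxE rmorphB rmorphM.
rewrite (Gexp ds hw) (Gsym _ _ ds) Gf_ee Gf_ee mul_ee.
have -> : (A *m c) i ord0 = \det A * y i ord0.
  by rewrite /c mulmxA mul_mx_adj mul_scalar_mx mxE.
rewrite /alpha mxE Hii -/r; ring.
Qed.

Lemma int_abs_le_sq (z : int) : `|z| <= z ^+ 2.
Proof. rewrite expr2; nia. Qed.

Definition box n (M : int) : seq 'cV[int]_n :=
  map (fun f : {ffun 'I_n -> 'I_(2 * `|M| + 1)} => \col_k ((f k)%:Z - (`|M|%N)%:Z))
      (enum {ffun 'I_n -> 'I_(2 * `|M| + 1)}).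

Lemma in_box n (M : int) (c : 'cV[int]_n) :
  (forall k, `|c k ord0| <= M) -> c \in box n M.
Proof.
move=> hc.
have idx : forall k, (absz (c k ord0 + Posz (absz M))%R < 2 * absz M + 1)%N.
  move=> k; have := hc k; lia.
apply/mapP; exists ([ffun k => Ordinal (idx k)] : {ffun 'I_n -> 'I_(2 * `|M| + 1)}); first by rewrite mem_enum.
apply/matrixP => a b; rewrite ord1 !mxE ffunE /=.
have := hc a; have : 0 <= M by apply: le_trans (hc a).
rewrite ler_norml => M0 /andP [h1 h2].
move: (c a _) h1 h2 => z h1 h2; lia.
Qed.


Lemma orbit_refl n (A : 'M[int]_n) x : Defs.in_orbit A x x.
Proof. by exists 1%:M; split; [exact: W0_one | rewrite mul1mx]. Qed.

Lemma orbit_fin n (A : 'M[int]_n) (d : 'I_n -> rat) :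
  (forall i, A i i = 2) ->
  (forall i, 0 < d i) ->
  (forall i j, d i * (A i j)%:~R = d j * (A j i)%:~R) ->
  (forall v, (exists i, v i != 0) -> 0 < Gf A d v v) ->
  forall x, exists l, uniq l /\ forall y, y \in l <-> Defs.in_orbit A x y.
Proof.
move=> Hii dpos ds pd x.
have hD := det_nz pd.
have qinv : forall y, Defs.in_orbit A x y -> qf A d y = qf A d x.
  by move=> y [w [hw ->]]; exact: (W0_inv (qf_sref Hii ds) hw x).
pose B k := qf A d x * Gf A d (vq (\adj A *m ee k)) (vq (\adj A *m ee k))
            / (d k * (\det A)%:~R) ^+ 2.
have hB : forall y, Defs.in_orbit A x y -> forall k, (vq (\adj A *m y) k) ^+ 2 <= B k.
  move=> y hy k.
  have cs := GCS (vq (\adj A *m y)) (vq (\adj A *m ee k)) ds pd.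
  rewrite Gf_adj in cs.
  have e : Gf A d (vq (\adj A *m y)) (vq (\adj A *m y)) = qf A d x by exact: qinv.
  rewrite e in cs.
  have hp : 0 < (d k * (\det A)%:~R) ^+ 2.
    by rewrite lt_def sqr_ge0 andbT sqrf_eq0 mulf_neq0 ?intr_eq0 // gt_eqF.
  by rewrite /B ler_pdivlMr // -exprMn mulrA.
have B0 : forall k, 0 <= B k.
  by move=> k; apply: le_trans (hB x (orbit_refl A x) k); exact: sqr_ge0.
pose M : int := \sum_k Num.ceil (B k).
have hM : forall y, Defs.in_orbit A x y -> forall k, `|(\adj A *m y) k ord0| <= M.
  move=> y hy k.
  have h1 := int_abs_le_sq ((\adj A *m y) k ord0).
  rewrite -(ler_int rat).
  apply: le_trans (_ : _ <= (((\adj A *m y) k ord0) ^+ 2)%:~R) _; first by rewrite ler_int.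
  rewrite rmorphXn /=; apply: le_trans (hB y hy k) _.
  apply: le_trans (ceil_ge _) _; rewrite ler_int /M (bigD1 k) //= lerDl.
  apply: sumr_ge0 => j _; rewrite ceil_ge0; apply: lt_le_trans (B0 j).
  by rewrite ltrN10.
apply: (@fin_list _ _ (map (fun c => \col_k (((A *m c) k ord0) %/ \det A)%Z) (box n M))).
move=> y hy; apply/mapP; exists (\adj A *m y); first by apply: in_box; exact: hM.
apply/matrixP => a b; rewrite ord1 [RHS]mxE mulmxA mul_mx_adj mul_scalar_mx mxE mulKz //.
Qed.

Lemma sum_const_seq (T : Type) (R : nmodType) (l : seq T) (c : R) :
  \sum_(y <- l) c = c *+ size l.
Proof. by elim: l => [|a l IH]; rewrite ?big_nil // big_cons IH mulrS. Qed.

Lemma orbit_sum_const2 n (A : 'M[int]_n) x (R : nmodType) (f g : 'cV[int]_n -> R) c1 c2 :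
  (exists l, uniq l /\ forall y, y \in l <-> Defs.in_orbit A x y) ->
  (forall y, Defs.in_orbit A x y -> f y = c1) ->
  (forall y, Defs.in_orbit A x y -> g y = c2) ->
  exists N, (0 < N)%N /\ orbit_sum A x f = c1 *+ N /\ orbit_sum A x g = c2 *+ N.
Proof.
move=> H hf hg; rewrite /orbit_sum.
case: excluded_middle_informative => [H'|nH]; last by exfalso.
case: (constructive_indefinite_description _ H') => l [ul hl] /=.
exists (size l); split.
  have : x \in l by apply/hl; exact: orbit_refl.
  by case: l {ul hl}.
split.
  rewrite (eq_big_seq (fun _ => c1)) ?sum_const_seq // => y /hl; exact: hf.
rewrite (eq_big_seq (fun _ => c2)) ?sum_const_seq // => y /hl; exact: hg.
Qed.


Lemma ev_const n (A : 'M[int]_n) (F : fieldType) (s : 'rV[F]_n) x y :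
  center_G A s -> Defs.in_orbit A x y -> ev y s = ev x s.
Proof.
move/center_iff=> [hs ha] [w [hw ->]].
exact: (W0_inv (hom_sinv (ev_hom hs) ha) hw x).
Qed.

Theorem corollary2p2 (n : nat) (A : 'M[int]_n) (F : closedFieldType) :
  (0 < n)%N -> cartan_irreducible A -> [pchar F] =i pred0 ->
  exists k : nat,
    card_is (fun c : 'cV[int]_n -> F =>
               exists s : 'rV[F]_n, torus s /\ admits_1dim A s /\ c = cchar A s) k /\
    card_is (fun s : 'rV[F]_n => center_G A s) k.
Proof.
move=> n0 [Hii _ _ _ [d [dpos ds pd]]] pc.
have hD := det_nz pd.
have [L HL] := @center_fin n A F hD.
have [l [ul hl]] := fin_list HL.
exists (size l); split; last exact: card_list ul hl.
have inj : forall s1 s2 : 'rV[F]_n, center_G A s1 -> center_G A s2 ->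
    cchar A s1 = cchar A s2 -> s1 = s2.
  move=> s1 s2 h1 h2 e; apply/matrixP => a i; rewrite ord1.
  have := congr1 (fun c => c (ee i)) e. rewrite /cchar.
  have -> : dominant (ee i) by apply/forallP => j; rewrite !mxE ler0n.
  have [hs1 ha1] := (center_iff A s1).1 h1.
  have [hs2 ha2] := (center_iff A s2).1 h2.
  have [N [N0 [e1 e2]]] := @orbit_sum_const2 n A (ee i) F (fun y => ev y s1)
      (fun y => ev y s2) (s1 ord0 i) (s2 ord0 i) (orbit_fin Hii dpos ds pd (ee i))
      (fun y hy => etrans (ev_const h1 hy) (ev_ee s1 i))
      (fun y hy => etrans (ev_const h2 hy) (ev_ee s2 i)).
  rewrite e1 e2.
  rewrite -(mulr_natr (s1 ord0 i)) -(mulr_natr (s2 ord0 i)) => h.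
  have Nn0 : (N%:R : F) != 0 by rewrite ((pcharf0P F).1 pc N) -lt0n.
  exact: (mulIf Nn0 h).
exists (fun i => cchar A (tnth (in_tuple l) i)); split.
  move=> i j e.
  have ci : forall k, center_G A (tnth (in_tuple l) k) by move=> k; apply/hl; exact: mem_tnth.
  have := inj _ _ (ci i) (ci j) e.
  have [x0 _] : exists x0 : 'rV[F]_n, true by exists 0.
  rewrite !(tnth_nth x0) /= => /eqP.
  by rewrite nth_uniq // => /eqP /val_inj.
move=> c; split.
  move=> [s [hs [ha ->]]].
  have [s' [hc' e]] := admits_center Hii ha.
  have : s' \in l by apply/hl.
  by move/(tnthP (in_tuple l)) => [i hi]; exists i; rewrite e hi.
move=> [i <-]; exists (tnth (in_tuple l) i).
have hc : center_G A (tnth (in_tuple l) i) by apply/hl; exact: mem_tnth.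
by have [hs ha] := center_admits hc; split.
Qed.
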